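(* Let $h\ge 2$ and let $p_1,\dots,p_h$ be primes with $p_i\neq p_{i+1}$ for $i=1,\dots,h-1$. Then there are $\mathrm{CC}[p_1;\dots;p_h]$-circuits of size $2^{O(n^{1/(h-1)})}$ computing the $n$-ary conjunction $\mathrm{AND}_n$.
   Context: For an integer $m\ge 1$ and $A\subseteq\{0,\dots,m-1\}$, a gate $\mathrm{MOD}_m^A$ takes finitely many Boolean inputs (counted with multiplicity, as a wire may be connected several times) and outputs $1$ if their sum modulo $m$ lies in $A$, and $0$ otherwise. A $\mathrm{CC}[m_1;\dots;m_h]$-circuit is a Boolean circuit of depth $h$ in which every gate on level $i$ (level $1$ being fed by the inputs and level $h$ containing the output gate) is of the form $\mathrm{MOD}_{m_i}^A$ for some $A$ (possibly different for each gate), with multiple wires allowed. The size of a circuit is its number of gates. *)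

(* Defs.v *)
From mathcomp Require Import all_boot.


Set Implicit Arguments. Unset Strict Implicit. Unset Printing Implicit Defensive.

(* A MOD_m^A gate: [wires] gives, for each input position j of the previous
   level, the number of wires (multiplicity) from j to this gate; [acc] is the
   accepting set A (only its behaviour on residues 0..m-1 matters). *)
Record gate := Gate { wires : seq nat ; acc : pred nat }.

Definition eval_gate (m : nat) (g : gate) (x : seq bool) : bool :=
  acc g ((\sum_(j < size x) nth 0 (wires g) j * nth false x j) %% m).

Definition eval_level (m : nat) (L : seq gate) (x : seq bool) : seq bool :=
  map (fun g => eval_gate m g x) L.

Fixpoint eval_levels (ms : seq nat) (C : seq (seq gate)) (x : seq bool) : seq bool :=
  match ms, C with
  | m :: ms', L :: C' => eval_levels ms' C' (eval_level m L x)
  | _, _ => x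
  end.

Definition is_CC_circuit (ms : seq nat) (C : seq (seq gate)) : Prop :=
  size C = size ms /\ size (last [::] C) = 1%N.

Definition circuit_output (ms : seq nat) (C : seq (seq gate)) (x : seq bool) : bool :=
  head false (eval_levels ms C x).

Definition circuit_size (C : seq (seq gate)) : nat := sumn (map size C).

Definition computes_AND (n : nat) (ms : seq nat) (C : seq (seq gate)) : Prop :=
  forall x : seq bool, size x = n -> circuit_output ms C x = all (fun b : bool => b) x.

(* Main.v *)
Require Import Defs.
From Stdlib Require Import Reals.
From mathcomp Require Import all_boot.
From Stdlib Require Import Lra.
From mathcomp Require cyclic.
From mathcomp Require Import zify.
Set Implicit Arguments. Unset Strict Implicit. Unset Printing Implicit Defensive.

Fixpoint dot (w : seq nat) (x : seq bool) : nat :=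
  match w, x with a :: w', b :: x' => a * b + dot w' x' | _, _ => 0 end.

Lemma dotE w x : \sum_(j < size x) nth 0 w j * nth false x j = dot w x.
Proof.
elim: x w => [|b x IH] w; first by rewrite big_ord0; case: w.
rewrite big_ord_recl /=; case: w => [|a w] /=.
  by rewrite add0n big1 // => i _; rewrite nth_nil.
by rewrite -IH.
Qed.

Lemma dot_nil w : dot w [::] = 0. Proof. by case: w. Qed.

Lemma dot_catr w x1 x2 :
  dot w (x1 ++ x2) = dot (take (size x1) w) x1 + dot (drop (size x1) w) x2.
Proof.
elim: x1 w => [|b x1 IH] w /=; first by rewrite take0 drop0 dot_nil.
by case: w => [|a w] //=; rewrite IH addnA.
Qed.

Lemma dot_cat w1 w2 x1 x2 : size w1 = size x1 ->
  dot (w1 ++ w2) (x1 ++ x2) = dot w1 x1 + dot w2 x2.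
Proof.
move=> e; rewrite dot_catr -e take_size_cat // drop_size_cat //.
Qed.

Lemma dot_nseq0 a w x : dot (nseq a 0 ++ w) x = dot w (drop a x).
Proof.
elim: a x => [|a IH] x; first by rewrite drop0.
by case: x => [|b x] /=; rewrite ?dot_nil // IH.
Qed.

Lemma dot_take w x : dot w x = dot w (take (size w) x).
Proof. by elim: w x => [|a w IH] [|b x] //=; rewrite IH. Qed.


Lemma dot_flatten (I : eqType) (A : I -> seq nat) (B : I -> seq bool) (s : seq I) :
  (forall i, i \in s -> size (A i) = size (B i)) ->
  dot (flatten (map A s)) (flatten (map B s)) = \sum_(i <- s) dot (A i) (B i).
Proof.
elim: s => [|i s IH] H /=; first by rewrite big_nil.
rewrite big_cons dot_cat ?H ?mem_head // IH // => j js; apply: H.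
by rewrite inE js orbT.
Qed.

Lemma dot_scale a c Y : dot (map (muln a) c) Y = a * dot c Y.
Proof.
elim: c Y => [|x c IH] [|y Y] /=; rewrite ?muln0 // IH mulnDr; by rewrite mulnA.
Qed.

Lemma size_flatten_unif (T : Type) (I : eqType) (F : I -> seq T) (s : seq I) G :
  (forall i, i \in s -> size (F i) = G) -> size (flatten (map F s)) = size s * G.
Proof.
elim: s => [|i s IH] H //=; rewrite size_cat H ?mem_head // IH // => j js.
by apply: H; rewrite inE js orbT.
Qed.

Lemma chunk_flatten (T I : Type) (x0 : I) (F : I -> seq T) (s : seq I) G b :
  (forall i, size (F i) = G) -> b < size s ->
  take G (drop (b * G) (flatten (map F s))) = F (nth x0 s b).
Proof.
move=> H; elim: s b => [|i s IH] [|b] //= bs.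
  by rewrite drop0 -(H i) take_size_cat.
rewrite mulSn addnC -drop_drop -{1}(H i) drop_size_cat //.
by rewrite H IH.
Qed.

Lemma take_blocks (T : Type) (x : seq T) s f m :
  take (s * f) (drop (m * s) x) =
  flatten [seq take s (drop ((m + t) * s) x) | t <- iota 0 f].
Proof.
elim: f m => [|f IH] m; first by rewrite muln0 take0.
rewrite mulnS takeD drop_drop -mulSn IH /= addn0.
congr (_ ++ _); rewrite -[1]/(1 + 0) iotaDl -map_comp.
by congr flatten; apply: eq_map => t /=; rewrite addnA addn1.
Qed.


Definition mk_gate (f G : nat) (c : seq nat) (b : nat) (wa : seq nat * pred nat) : gate :=
  Gate (nseq (b * f * G) 0 ++ flatten [seq map (muln (nth 0 wa.1 t)) c | t <- iota 0 f]) wa.2.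

Definition mk_level f B G c (gs : seq (seq nat * pred nat)) :=
  flatten [seq [seq mk_gate f G c b wa | wa <- gs] | b <- iota 0 B].

Definition Inv q G (c : seq nat) s B (X x : seq bool) :=
  [/\ size c = G, size x = B * s, size X = B * G &
   forall b, b < B -> dot c (take G (drop (b * G) X)) = all id (take s (drop (b * s) x)) %[mod q]].

Definition gadget_ok p q f (gs : seq (seq nat * pred nat)) c' :=
  size c' = size gs /\ forall z : seq bool, size z = f ->
    dot c' [seq wa.2 (dot wa.1 z %% p) | wa <- gs] = all id z %[mod q].

Lemma sum_iota_ord f (F : nat -> nat) : \sum_(t <- iota 0 f) F t = \sum_(t < f) F t.
Proof. by rewrite -(big_mkord xpredT) /index_iota subn0. Qed.

Lemma eval_mk_level p f B G c gs X :
  eval_level p (mk_level f B G c gs) X =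
  flatten [seq [seq eval_gate p (mk_gate f G c b wa) X | wa <- gs] | b <- iota 0 B].
Proof.
rewrite /eval_level /mk_level map_flatten -map_comp; congr flatten.
by apply: eq_map => b /=; rewrite -map_comp.
Qed.

Lemma blk_lt b t f B : b < B -> t < f -> b * f + t < f * B.
Proof.
move=> bB tf; apply: (@leq_trans (b * f + f)); first by rewrite ltn_add2l.
by rewrite -mulSnr mulnC leq_mul2l bB orbT.
Qed.

Lemma all_flat (T : Type) (a : pred T) ss : all a (flatten ss) = all (all a) ss.
Proof. by elim: ss => //= s ss IH; rewrite all_cat IH. Qed.

Lemma step p q G c s f B' X x gs c' :
  Inv p G c s (f * B') X x -> gadget_ok p q f gs c' ->
  Inv q (size gs) c' (s * f) B' (eval_level p (mk_level f B' G c gs) X) x.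
Proof.
case=> Hc Hx HX HI [Hc' Hg]; split => //.
- by rewrite Hx (mulnC f B') -mulnA (mulnC f s).
- rewrite eval_mk_level (@size_flatten_unif _ _ _ _ (size gs)) ?size_iota //.
  by move=> i _; rewrite size_map.
move=> b bB.
rewrite eval_mk_level (@chunk_flatten _ _ 0); last first.
- by rewrite size_iota.
- by move=> i; rewrite size_map.
rewrite nth_iota // add0n.
pose z := [seq all id (take s (drop ((b * f + t) * s) x)) | t <- iota 0 f].
have key : forall wa, eval_gate p (mk_gate f G c b wa) X = wa.2 (dot wa.1 z %% p).
  move=> wa; rewrite /eval_gate /mk_gate /= dotE dot_nseq0 dot_take.
  rewrite (@size_flatten_unif _ _ _ _ (G)); last by move=> i _; rewrite size_map.
  rewrite size_iota (mulnC f G) take_blocks dot_flatten; last first.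
    move=> t; rewrite mem_iota add0n => /andP [_ tf].
    rewrite size_map Hc size_takel // size_drop leq_subRL.
      by rewrite HX -mulSnr leq_mul2r (blk_lt bB tf) orbT.
    by rewrite HX leq_mul2r ltnW ?(blk_lt bB tf) ?orbT.
  congr (wa.2 _).
  rewrite -dotE size_map size_iota sum_iota_ord.
  rewrite -[LHS]modn_summ -[RHS]modn_summ; congr (_ %% p); apply: eq_bigr => t _.
  rewrite dot_scale (nth_map 0) ?size_iota // nth_iota // add0n.
  rewrite -modnMmr HI ?modnMmr //.
  exact: blk_lt bB (ltn_ord t).
rewrite (eq_map key) Hg; last by rewrite size_map size_iota.
have -> : b * (s * f) = (b * f) * s by rewrite mulnA mulnAC.
by rewrite take_blocks all_flat /z !all_map.
Qed.

Record lev := Lev { lp : nat; lf : nat; lB : nat; lgs : seq (seq nat * pred nat); lc : seq nat }.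

Fixpoint build (sp : seq lev) G c : seq (seq gate) :=
  match sp with
  | [::] => [::]
  | e :: sp' => mk_level (lf e) (lB e) G c (lgs e) :: build sp' (size (lgs e)) (lc e)
  end.

Definition headmod (sp : seq lev) qf := if sp is e :: _ then lp e else qf.

Fixpoint chain_ok (sp : seq lev) B qf : Prop :=
  match sp with
  | [::] => True
  | e :: sp' => [/\ B = lf e * lB e,
                 gadget_ok (lp e) (headmod sp' qf) (lf e) (lgs e) (lc e)
               & chain_ok sp' (lB e) qf]
  end.

Lemma chain sp qf : forall G c s B X x, chain_ok sp B qf -> Inv (headmod sp qf) G c s B X x ->
  exists s', Inv qf (last G [seq size (lgs e) | e <- sp]) (last c [seq lc e | e <- sp]) s'
      (last B [seq lB e | e <- sp]) (eval_levels [seq lp e | e <- sp] (build sp G c) X) x.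
Proof.
elim: sp => [|e sp IH] G c s B X x /=; first by exists s.
case=> -> Hg Hch HI.
exact: (IH _ _ _ _ _ _ Hch (step HI Hg)).
Qed.

Lemma size_mk_level f B G c gs : size (mk_level f B G c gs) = B * size gs.
Proof.
rewrite /mk_level (@size_flatten_unif _ _ _ _ (size gs)) ?size_iota //.
by move=> i _; rewrite size_map.
Qed.

Lemma size_build sp G c : map size (build sp G c) = [seq lB e * size (lgs e) | e <- sp].
Proof.
by elim: sp G c => [|e sp IH] G c //=; rewrite size_mk_level IH.
Qed.

Lemma size_build' sp G c : size (build sp G c) = size sp.
Proof. by rewrite -(size_map size) size_build size_map. Qed.

Definition pad_gate p n m (g : gate) : gate :=
  Gate (take n (wires g)) (fun r => acc g ((r + dot (drop n (wires g)) (nseq m true)) %% p)).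

Lemma eval_pad p n m g x : size x = n ->
  eval_gate p (pad_gate p n m g) x = eval_gate p g (x ++ nseq m true).
Proof. by move=> sx; rewrite /eval_gate /= !dotE dot_catr sx modnDml. Qed.

Fixpoint Wseq p f : seq (seq nat) :=
  if f is f'.+1 then [seq a :: w | a <- iota 0 p, w <- Wseq p f'] else [:: [::]].

Definition andgs p f : seq (seq nat * pred nat) :=
  (nseq f 0, fun _ => true) :: [seq (w, fun r => (r + 1) %% p == sumn w %% p) | w <- Wseq p f].

Definition andc p q f := 1 :: nseq (p ^ f) ((q - 1) * p ^ ((totient q).-1 * f.-1)).

Lemma size_Wseq p f : size (Wseq p f) = p ^ f.
Proof. by elim: f => //= f IH; rewrite size_allpairs size_iota IH expnS. Qed.

Lemma Wseq_size p f w : w \in Wseq p f -> size w = f.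
Proof.
elim: f w => [|f IH] w /=; first by rewrite inE => /eqP ->.
by case/allpairsP => [[a w'] [_ /IH H ->]] /=; rewrite H.
Qed.

Lemma countE (T : Type) (a : pred T) s : count a s = \sum_(i <- s) a i.
Proof. by rewrite -sumn_count sumnE big_map. Qed.

Lemma dot_nseqC C ys : dot (nseq (size ys) C) ys = C * count id ys.
Proof. by elim: ys => [|y ys IH] /=; rewrite ?muln0 // IH mulnDr. Qed.

Lemma dot_split w z : size w = size z -> sumn w = dot w z + dot w (map negb z).
Proof.
elim: w z => [|a w IH] [|b z] //= /succn_inj /IH ->.
by case: b => /=; lia.
Qed.

Lemma dot_allnot w z : all id z -> dot w (map negb z) = 0.
Proof. by elim: z w => [|b z IH] [|a w] //= /andP [-> /IH ->]; rewrite muln0. Qed.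

Lemma sum_shift p d r : 0 < p ->
  \sum_(a <- iota 0 p) ((a + d) %% p == r %% p) = 1.
Proof.
move=> p0; pose v := (r + (p - d %% p)) %% p.
rewrite (eq_big_seq (fun a => nat_of_bool (a == v))).
  by rewrite -(countE (pred1 v)) count_uniq_mem ?iota_uniq // mem_iota add0n ltn_pmod.
move=> a; rewrite mem_iota add0n => ap.
rewrite -(eqn_modDr (p - d %% p)) -/v.
have -> : (a + d + (p - d %% p)) %% p = a.
  rewrite {1}(divn_eq d p) addnA -addnA subnKC; last by rewrite ltnW // ltn_pmod.
  by rewrite -addnA -mulSnr addnC modnMDl modn_small.
by [].
Qed.

Lemma count_W p u r : 0 < p -> has id u ->
  count (fun w => dot w u %% p == r %% p) (Wseq p (size u)) = p ^ (size u).-1.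
Proof.
move=> p0; elim: u => [|b u IH] //= Hu.
rewrite countE big_allpairs_dep /=.
case: b Hu => /= Hu.
  rewrite exchange_big /= (eq_bigr (fun _ => 1)) ?sum1_size ?size_Wseq //.
  move=> w _; rewrite -[RHS](sum_shift (dot w u) r p0); apply: eq_bigr => a _.
  by rewrite muln1.
have Hs : 0 < size u by case: u Hu IH.
rewrite (eq_bigr (fun _ => count (fun w => dot w u %% p == r %% p) (Wseq p (size u)))).
  by rewrite big_const_seq count_predT size_iota iter_addn_0 IH // -expnSr prednK.
by move=> a _; rewrite countE; apply: eq_bigr => w _; rewrite muln0.
Qed.


Lemma and_ok p q f : 1 < p -> 0 < q -> coprime p q -> gadget_ok p q f (andgs p f) (andc p q f).
Proof.
move=> p1 q0 cpq; split; first by rewrite /= size_nseq size_map size_Wseq.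
move=> z sz; rewrite /andgs /andc /= -map_comp.
have -> : p ^ f = size [seq ((fun r => (r + 1) %% p == sumn w %% p) (dot w z %% p)) | w <- Wseq p f].
  by rewrite size_map size_Wseq.
rewrite dot_nseqC count_map.
rewrite (eq_in_count (a2 := fun w => dot w (map negb z) %% p == 1 %% p)); last first.
  move=> w /Wseq_size sw /=.
  rewrite (dot_split (z := z)) ?sw // modnDml eqn_modDl eq_sym //.
case Hz: (all id z).
  rewrite (eq_count (a2 := pred0)) ?count_pred0 ?muln0 //.
  by move=> w /=; rewrite dot_allnot // mod0n modn_small.
have Hu : has id (map negb z).
  by rewrite has_map; apply/hasP; move/negbT: Hz => /allPn [y yz ny]; exists y.
rewrite -sz -(size_map negb) count_W ?size_map ?sz //; last by apply: ltnW.
rewrite -mulnA -expnD -{2}(mul1n f.-1) -mulnDl addn1 prednK ?totient_gt0 // expnM.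
rewrite mul1n -modnDmr -modnMmr -modnXm (cyclic.Euler_exp_totient cpq).
rewrite modnXm exp1n modnMmr muln1 modnDmr addnC subnK // modnn mod0n.
by [].
Qed.

Definition topgs : seq (seq nat * pred nat) := [:: ([:: 1], fun r => r == 1)].
Definition topc := [:: 1].

Lemma top_ok p : 1 < p -> gadget_ok p 0 1 topgs topc.
Proof.
move=> p1; split => // [[|y [|]]] //= _; rewrite !modn0.
by case: y => /=; rewrite ?mod0n ?modn_small.
Qed.

Lemma nth_le_sumn s i : nth 0 s i <= sumn s.
Proof.
elim: s i => [|x s IH] [|i] //=; first by rewrite leq_addr.
exact: leq_trans (IH i) (leq_addl _ _).
Qed.

Lemma sumn_le (T : Type) (F : T -> nat) s M : (forall i, F i <= M) -> sumn (map F s) <= size s * M.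
Proof. by move=> H; elim: s => //= i s IH; rewrite mulSn; exact: leq_add. Qed.

Lemma dot1 (y : seq bool) : 0 < size y -> dot [:: 1] (take 1 y) = all id (take 1 y).
Proof. by case: y => [|[] y] //=; rewrite take0. Qed.

Section Construct.
Variables (h k : nat) (p : seq nat).
Hypotheses (h2 : 2 <= h) (sp_ : size p = h) (k1 : 1 <= k)
  (pr : forall i, i < h -> prime (nth 0 p i))
  (nd : forall i, i.+1 < h -> nth 0 p i <> nth 0 p i.+1).

Definition spec i :=
  if i.+1 < h then Lev (nth 0 p i) k (k ^ (h - 2 - i)) (andgs (nth 0 p i) k)
                     (andc (nth 0 p i) (nth 0 p i.+1) k)
  else Lev (nth 0 p i) 1 1 topgs topc.

Lemma lp_spec i : lp (spec i) = nth 0 p i.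
Proof. by rewrite /spec; case: ifP. Qed.

Lemma chain_spec d : forall j, j + d.+1 = h -> chain_ok (map spec (iota j d.+1)) (k ^ d) 0.
Proof.
elim: d => [|d IH] j Hj.
  rewrite /= /spec -Hj addn1 ltnn /=; split => //; apply: top_ok.
  by apply: prime_gt1; apply: pr; rewrite -Hj addn1.
rewrite [iota _ _]/= map_cons /=.
have jh : j.+1 < h by rewrite -Hj; lia.
have Hs : spec j = Lev (nth 0 p j) k (k ^ (h - 2 - j)) (andgs (nth 0 p j) k)
                     (andc (nth 0 p j) (nth 0 p j.+1) k) by rewrite /spec jh.
rewrite lp_spec Hs /=; split.
- by rewrite expnS; congr (_ * _ ^ _); lia.
- rewrite lp_spec; apply: and_ok.
  + exact/prime_gt1/pr/ltnW.
  + exact/prime_gt0/pr.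
  + have pj : prime (nth 0 p j) by apply/pr/ltnW.
    have pj1 : prime (nth 0 p j.+1) by apply: pr.
    by rewrite prime_coprime // dvdn_prime2 //; apply/eqP/nd.
- have -> : h - 2 - j = d by lia.
  by apply: (IH j.+1); lia.
Qed.

Lemma construct n : 1 <= n -> n <= k ^ (h - 1) ->
  exists C, is_CC_circuit p C /\ computes_AND n p C /\
            circuit_size C <= h * (k ^ h * (sumn p ^ k + 1)).
Proof.
move=> n1 nk.
pose N := k ^ (h - 1). pose m := N - n.
pose sp := map spec (iota 0 h).
pose sp' := map spec (iota 1 (h - 1)).
have hE : h = (h - 1).+1 by lia.
have Hsp : sp = spec 0 :: sp' by rewrite /sp /sp' {1}hE.
have Hsplit : sp = rcons (map spec (iota 0 (h - 1))) (spec (h - 1)).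
  by rewrite /sp -map_rcons -cats1 -[[:: h - 1]]/(iota (0 + (h - 1)) 1) -iotaD addn1 -hE.
have Htop : spec (h - 1) = Lev (nth 0 p (h - 1)) 1 1 topgs topc.
  by rewrite /spec -hE ltnn.
have Hmap : map lp sp = p.
  by rewrite /sp -map_comp (eq_map lp_spec) -sp_; exact: mkseq_nth.
have Hch : chain_ok sp N 0.
  by rewrite /sp /N {1}hE; apply: chain_spec; rewrite add0n.
pose e0 := spec 0.
pose L0 := mk_level (lf e0) (lB e0) 1 [:: 1] (lgs e0).
pose C := map (pad_gate (nth 0 p 0) n m) L0 :: build sp' (size (lgs e0)) (lc e0).
have HS : map size C = map size (build sp 1 [:: 1]) by rewrite Hsp /= size_map.
exists C; split; [split|split].
- by rewrite /= size_build' /sp' size_map size_iota -hE.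
- rewrite -(last_map size C [::]) HS size_build Hsplit map_rcons last_rcons Htop.
  by [].
- move=> x sx.
  pose x' := x ++ nseq m true.
  have sx' : size x' = N by rewrite size_cat size_nseq sx subnKC.
  have HI : Inv (headmod sp 0) 1 [:: 1] 1 N x' x'.
    split; rewrite ?muln1 // => b bN.
    by rewrite !muln1 -/(dot [:: 1] _) dot1 // size_drop subn_gt0 sx'.
  have [s' ] := chain Hch HI.
  have L1 : last 1 [seq size (lgs e) | e <- sp] = 1 by rewrite Hsplit map_rcons last_rcons Htop.
  have L2 : last [:: 1] [seq lc e | e <- sp] = [:: 1] by rewrite Hsplit map_rcons last_rcons Htop.
  have L3 : last N [seq lB e | e <- sp] = 1 by rewrite Hsplit map_rcons last_rcons Htop.
  rewrite L1 L2 L3.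
  case=> _ Hx' HY HI'.
  have := HI' 0 erefl.
  rewrite mul1n in Hx'; rewrite !mul0n !drop0 -Hx' take_size !modn0.
  have Heval : eval_levels p C x = eval_levels (map lp sp) (build sp 1 [:: 1]) x'.
    rewrite -{1}Hmap Hsp /=.
    congr (eval_levels _ _ _); rewrite lp_spec /eval_level -map_comp.
    by apply: eq_map => g; apply: eval_pad.
  rewrite /circuit_output Heval.
  move: HY; case: (eval_levels _ _ _) => [|y [|]] //= _.
  rewrite all_cat all_nseq orbT andbT.
  by case: y; case: (all id x).
- rewrite /circuit_size HS size_build /sp -map_comp.
  rewrite -[X in X * _](size_iota 0 h); apply: sumn_le => i /=.
  rewrite /spec; case: ifP => _ /=.
    rewrite size_map size_Wseq; apply: leq_mul.
      by apply: leq_pexp2l => //; lia.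
    by rewrite addn1 ltnS leq_exp2r // nth_le_sumn.
  by rewrite muln_gt0 expn_gt0 k1 addn1.
Qed.

End Construct.

Lemma INR_expn a b : INR (a ^ b) = pow (INR a) b.
Proof.
elim: b => [|b IH]; first by rewrite expn0.
by rewrite expnS mulnE mult_INR IH.
Qed.

Lemma nat_bound h k S : 0 < h -> 1 <= k -> 1 <= S ->
  h * (k ^ h * (S ^ k + 1)) <= 2 ^ ((2 * h + 1 + S) * k).
Proof.
move=> h0 k1 S1.
have a : h <= 2 ^ (h * k).
  apply: leq_trans (ltnW (ltn_expl h (ltnSn 1))) _.
  by apply: leq_pexp2l => //; rewrite leq_pmulr.
have b : k ^ h <= 2 ^ (k * h).
  by rewrite expnM leq_exp2r // ltnW // ltn_expl.
have c : S ^ k + 1 <= 2 ^ (k + S * k).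
  rewrite expnD; apply: (@leq_trans (2 * S ^ k)).
    by rewrite mul2n -addnn leq_add2l expn_gt0; case: S S1.
  apply: leq_mul; first by rewrite -{1}(expn1 2) leq_pexp2l.
  by rewrite expnM leq_exp2r // ltnW // ltn_expl.
apply: leq_trans (leq_mul a (leq_mul b c)) _.
rewrite -!expnD; apply: leq_pexp2l => //; lia.
Qed.

Theorem proposition4p2 (h : nat) (p : seq nat) :
  (2 <= h)%N -> size p = h ->
  (forall i, (i < h)%N -> prime (nth 0%N p i)) ->
  (forall i, (i.+1 < h)%N -> nth 0%N p i <> nth 0%N p i.+1) ->
  exists (c : R) (N : nat), Rlt 0 c /\
    forall n : nat, (N <= n)%N -> (1 <= n)%N ->
      exists C : seq (seq gate),
        is_CC_circuit p C /\ computes_AND n p C /\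
        Rle (INR (circuit_size C))
            (Rpower 2 (Rmult c (Rpower (INR n) (Rdiv 1 (INR (h - 1)))))).
Proof.
move=> h2 sp pr nd.
pose S := sumn p. pose E := 2 * h + 1 + S.
have S1 : 1 <= S.
  apply: leq_trans (nth_le_sumn p 0); apply: ltnW; apply: prime_gt1; apply: pr; lia.
exists (INR (2 * E)), 1%N; split.
  by apply: lt_0_INR; apply/ltP; rewrite /E; lia.
move=> n _ n1.
have Hex : exists k, n <= k ^ (h - 1).
  by exists n; rewrite -{1}(expn1 n) leq_pexp2l //; lia.
case: (ex_minnP Hex) => k Hk Hmin.
have k1 : 1 <= k.
  case: k Hk Hmin => // ; rewrite exp0n; lia.
have [C [HC [HA Hs]]] := construct h2 sp k1 pr nd n1 Hk.
exists C; split; first done; split; first done.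
have Hb : circuit_size C <= 2 ^ (E * k).
  apply: leq_trans Hs _; apply: nat_bound => //; lia.
have Hn : Rle 1 (INR n) by apply: (le_INR 1 n); apply/leP.
have hpos : Rlt 0 (INR (h - 1)) by apply: lt_0_INR; apply/ltP; lia.
set t := Rpower (INR n) (Rdiv 1 (INR (h - 1))).
have t1 : Rle 1 t.
  rewrite /t -{1}(Rpower_O (INR n)); last lra.
  apply: Rle_Rpower => //; apply: Rlt_le; apply: Rdiv_lt_0_compat; lra.
have tpow : pow t (h - 1) = INR n.
  rewrite -Rpower_pow; last lra.
  rewrite /t Rpower_mult.
  replace (Rmult (Rdiv 1 (INR (h - 1))) (INR (h - 1))) with R1 by (field; lra).
  apply: Rpower_1; lra.
have Hk1 : Rlt (INR (k - 1)) t.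
  apply: Rnot_le_lt => H.
  have := pow_incr t (INR (k - 1)) (h - 1) (conj (Rle_trans 0 1 t Rle_0_1 t1) H).
  rewrite tpow -INR_expn => H2.
  have H3 : (k - 1) ^ (h - 1) < n.
    rewrite ltnNge; apply/negP => H3; have := Hmin _ H3; lia.
  move/ltP: H3 => /lt_INR; lra.
have HINR : Rle (INR k) (Rplus t 1).
  have -> : k = (k - 1).+1 by lia.
  rewrite S_INR; lra.
apply: (Rle_trans _ (INR (2 ^ (E * k)))).
  by apply: le_INR; apply/leP.
have I2 : INR 2 = IZR 2 by rewrite INR_IZR_INZ.
rewrite INR_expn I2 -Rpower_pow; last lra.
apply: Rle_Rpower; first lra.
rewrite !mulnE !mult_INR.
have E0 : Rle 0 (INR E) by apply: pos_INR.
rewrite I2.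
nra.
Qed.
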